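(* Let $\mathcal{S}$ be a free abelian group of infinite rank, in the signature $(+,-,0)$, and let $I$ be the set of subgroups $A\le\mathcal{S}$ of finite rank which are direct summands of $\mathcal{S}$ (there is $C\le\mathcal{S}$ with $\mathcal{S}=A\oplus C$), ordered by inclusion. Then $\lim_I\mathrm{Th}(A^* )=\mathrm{Th}(\mathcal{S}^* )$, where $A$ ranges over $I$.
   Context: For a structure $\mathcal{T}$ with universe $T$, $\mathrm{Th}(\mathcal{T}^* )$ is the set of sentences in $(+,-,0)$ expanded by a constant for each element of $T$ that are true in $\mathcal{T}$; these are regarded as subsets of the set of sentences with constants from the universe of $\mathcal{S}$. For a family $\{\Delta_i\}_{i\in I}$ indexed by a directed set: $\limsup_I \Delta_i=\{\theta: \forall i\ \exists j\ge i\ [\theta\in\Delta_j]\}$, $\liminf_I \Delta_i=\{\theta: \exists i\ \forall j\ge i\ [\theta\in\Delta_j]\}$, and $\lim_I\Delta_i=\Delta$ means both equal $\Delta$. *)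

(* Defs.v *)
From HB Require Import structures.
From mathcomp Require Import all_boot all_order all_algebra.
Set Implicit Arguments. Unset Strict Implicit. Unset Printing Implicit Defensive.
Import Order.TTheory GRing.Theory Num.Theory.
Local Open Scope ring_scope.

Section Defs.
Variable S : zmodType.

Definition Zindependent (n : nat) (v : 'I_n -> S) : Prop :=
  forall c : 'I_n -> int, \sum_(i < n) v i *~ c i = 0 -> forall i, c i = 0.

Definition free_abelian_infinite_rank : Prop :=
  exists B : S -> Prop,
    (forall n (v : 'I_n -> S), injective v -> (forall i, B (v i)) -> Zindependent v)
    /\ (forall x : S, exists n (v : 'I_n -> S) (c : 'I_n -> int),
          (forall i, B (v i)) /\ x = \sum_(i < n) v i *~ c i)
    /\ (forall n (v : 'I_n -> S), exists b, B b /\ forall i, v i <> b).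

Definition subgroup (A : S -> Prop) : Prop :=
  A 0 /\ (forall x y, A x -> A y -> A (x + y)) /\ (forall x, A x -> A (- x)).

Definition finite_rank (A : S -> Prop) : Prop :=
  exists N : nat, forall n (v : 'I_n -> S),
    (forall i, A (v i)) -> Zindependent v -> (n <= N)%N.

Definition direct_summand (A : S -> Prop) : Prop :=
  exists C : S -> Prop, subgroup C /\
    (forall x, A x -> C x -> x = 0) /\
    (forall x, exists a c, A a /\ C c /\ x = a + c).

Definition in_I (A : S -> Prop) : Prop :=
  subgroup A /\ finite_rank A /\ direct_summand A.

Definition subset (A B : S -> Prop) : Prop := forall x, A x -> B x.

Inductive term : Type :=
  | tVar : nat -> term
  | tConst : S -> term
  | tZero : term
  | tAdd : term -> term -> term
  | tNeg : term -> term.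

Inductive formula : Type :=
  | fEq : term -> term -> formula
  | fFalse : formula
  | fNot : formula -> formula
  | fAnd : formula -> formula -> formula
  | fOr : formula -> formula -> formula
  | fImp : formula -> formula -> formula
  | fAll : nat -> formula -> formula
  | fEx : nat -> formula -> formula.

Fixpoint term_eval (e : nat -> S) (t : term) : S :=
  match t with
  | tVar n => e n
  | tConst a => a
  | tZero => 0
  | tAdd t1 t2 => term_eval e t1 + term_eval e t2
  | tNeg t1 => - term_eval e t1
  end.

Definition upd (e : nat -> S) (n : nat) (x : S) : nat -> S :=
  fun m => if m == n then x else e m.

Fixpoint holds (A : S -> Prop) (e : nat -> S) (f : formula) : Prop :=
  match f with
  | fEq t1 t2 => term_eval e t1 = term_eval e t2
  | fFalse => False
  | fNot g => ~ holds A e g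
  | fAnd g h => holds A e g /\ holds A e h
  | fOr g h => holds A e g \/ holds A e h
  | fImp g h => holds A e g -> holds A e h
  | fAll n g => forall x, A x -> holds A (upd e n x) g
  | fEx n g => exists x, A x /\ holds A (upd e n x) g
  end.

Fixpoint term_fv (t : term) : seq nat :=
  match t with
  | tVar n => [:: n]
  | tConst _ | tZero => [::]
  | tAdd t1 t2 => term_fv t1 ++ term_fv t2
  | tNeg t1 => term_fv t1
  end.

Fixpoint fv (f : formula) : seq nat :=
  match f with
  | fEq t1 t2 => term_fv t1 ++ term_fv t2
  | fFalse => [::]
  | fNot g => fv g
  | fAnd g h | fOr g h | fImp g h => fv g ++ fv h
  | fAll n g | fEx n g => filter (fun m => m != n) (fv g)
  end.

Definition sentence (f : formula) : Prop := fv f = [::].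

Fixpoint term_consts_in (A : S -> Prop) (t : term) : Prop :=
  match t with
  | tVar _ | tZero => True
  | tConst a => A a
  | tAdd t1 t2 => term_consts_in A t1 /\ term_consts_in A t2
  | tNeg t1 => term_consts_in A t1
  end.

Fixpoint consts_in (A : S -> Prop) (f : formula) : Prop :=
  match f with
  | fEq t1 t2 => term_consts_in A t1 /\ term_consts_in A t2
  | fFalse => True
  | fNot g | fAll _ g | fEx _ g => consts_in A g
  | fAnd g h | fOr g h | fImp g h => consts_in A g /\ consts_in A h
  end.

(** Th(A^* ): sentences with constants from A true in the substructure A. *)
Definition Th (A : S -> Prop) (f : formula) : Prop :=
  sentence f /\ consts_in A f /\ holds A (fun _ => 0) f.

Definition ThS (f : formula) : Prop := Th (fun _ => True) f.

Definition limsup_I (f : formula) : Prop :=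
  forall A, in_I A -> exists B, in_I B /\ subset A B /\ Th B f.

Definition liminf_I (f : formula) : Prop :=
  exists A, in_I A /\ forall B, in_I B -> subset A B -> Th B f.

End Defs.

(* Main.v *)
Require Import Defs.
From HB Require Import structures.
From mathcomp Require Import all_boot all_order all_algebra.
From Stdlib Require Import Classical FunctionalExtensionality ClassicalEpsilon.
Set Implicit Arguments. Unset Strict Implicit. Unset Printing Implicit Defensive.
Import Order.TTheory GRing.Theory Num.Theory.
Local Open Scope ring_scope.

Lemma sum_supp_eq (T : eqType) (R : zmodType) (U V : seq T) (F : T -> R) :
  uniq U -> uniq V ->
  (forall b, b \in U -> b \notin V -> F b = 0) ->
  (forall b, b \in V -> b \notin U -> F b = 0) ->
  \sum_(b <- U) F b = \sum_(b <- V) F b.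
Proof.
move=> uU uV hU hV.
have e1 : \sum_(b <- U) F b = \sum_(b <- U | b \in V) F b.
  rewrite [RHS]big_mkcond /=; apply: (@eq_big_seq R 0 +%R T); move=> b bU.
  by case: ifP => // /negbT bV; rewrite hU.
have e2 : \sum_(b <- V) F b = \sum_(b <- V | b \in U) F b.
  rewrite [RHS]big_mkcond /=; apply: (@eq_big_seq R 0 +%R T) => b bV.
  by case: ifP => // /negbT bU; rewrite hV.
rewrite e1 e2 -big_filter -[RHS]big_filter.
apply: perm_big; apply: uniq_perm; rewrite ?filter_uniq //.
by move=> b; rewrite !mem_filter andbC.
Qed.

Lemma sum_mulz (S : zmodType) (T : Type) (r : seq T) (P : pred T) (F : T -> S) n :
  (\sum_(i <- r | P i) F i) *~ n = \sum_(i <- r | P i) F i *~ n.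
Proof. by rewrite (big_morph (fun x => x *~ n) (fun x y => mulrzDl n x y) (mul0rz _ n)). Qed.

Lemma sum_pred1 (T : eqType) (R : zmodType) (U : seq T) (u : T) (F : T -> R) :
  uniq U -> u \in U -> (forall b, b \in U -> b != u -> F b = 0) -> \sum_(b <- U) F b = F u.
Proof.
move=> uU uin h; rewrite (big_rem u) //= big1_seq ?addr0 // => b /andP[_ bin].
by move: bin; rewrite mem_rem_uniq // => /andP[] bu bU; apply: h.
Qed.

Lemma int_dep n N (M : 'I_n -> 'I_N -> int) : (N < n)%N ->
  exists c : 'I_n -> int, (exists i, c i != 0) /\ forall j, \sum_(i < n) c i * M i j = 0.
Proof.
move=> lt.
pose A : 'M[rat]_(n, N) := \matrix_(i, j) (M i j)%:~R.
have nK : kermx A != 0.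
  rewrite -mxrank_eq0 mxrank_ker subn_eq0 -ltnNge.
  exact: leq_ltn_trans (rank_leq_col A) lt.
have [i0 [j0 hij]] : exists i0 j0, kermx A i0 j0 != 0.
  case: (classic (exists i0 j0, kermx A i0 j0 != 0)) => // H; exfalso.
  move/negP: nK; apply; apply/eqP/matrixP => i j; rewrite [RHS]mxE.
  by case: (eqVneq (kermx A i j) 0) => // h; exfalso; apply: H; exists i, j.
pose y i : rat := kermx A i0 i.
have hy : forall j, \sum_i y i * A i j = 0.
  move=> j; have := congr1 (fun B : 'M[rat]_(n, N) => B i0 j) (mulmx_ker A); rewrite !mxE => e; exact: e.
pose D := \prod_(i < n) denq (y i).
have D0 : (D%:~R : rat) != 0.
  by rewrite intr_eq0 gt_eqF // prodr_gt0 // => i _; apply: denq_gt0.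
pose c i := numq (y i) * \prod_(i' < n | i' != i) denq (y i').
have hc : forall i, ((c i)%:~R : rat) = y i * D%:~R.
  by move=> i; rewrite /c /D [in RHS](bigD1 i) //= !intrM numqE !mulrA.
exists c; split.
  exists j0; rewrite -(intr_eq0 rat) hc mulf_neq0 //.
move=> j; apply: (@intr_inj rat); rewrite rmorph_sum /=.
transitivity (D%:~R * \sum_i y i * A i j); last by rewrite hy mulr0.
rewrite mulr_sumr; apply: eq_bigr => i _.
by rewrite intrM hc mxE mulrCA mulrA.
Qed.

Section Gen.
Variable S : zmodType.
Implicit Types (x y : S) (L : seq S).

Definition addf (f : S -> int) := forall x y, f (x + y) = f x + f y.

Lemma addf0 f : addf f -> f 0 = 0.
Proof. by move=> h; apply: (addrI (f 0)); rewrite -h !addr0. Qed.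

Lemma addfN f x : addf f -> f (- x) = - f x.
Proof. by move=> h; apply: (addrI (f x)); rewrite -h !subrr addf0. Qed.

Lemma addfB f x y : addf f -> f (x - y) = f x - f y.
Proof. by move=> h; rewrite h addfN. Qed.

Lemma addfMn f x (n : nat) : addf f -> f (x *~ n) = f x * n.
Proof.
move=> h; elim: n => [|n IH]; first by rewrite mulr0 mulr0z addf0.
by rewrite -[x *~ _]/(x *+ n.+1) mulrS h -[x *+ n]/(x *~ n) IH intS mulrDr mulr1.
Qed.

Lemma addfMz f x c : addf f -> f (x *~ c) = f x * c.
Proof.
move=> h; case: c => n; first exact: addfMn.
by rewrite NegzE mulrNz addfN // mulrN addfMn.
Qed.

Lemma addf_sum f (T : Type) (r : seq T) (P : pred T) (F : T -> S) :
  addf f -> f (\sum_(i <- r | P i) F i) = \sum_(i <- r | P i) f (F i).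
Proof. by move=> h; rewrite (big_morph f h (addf0 h)). Qed.

Lemma addf_plus f g : addf f -> addf g -> addf (fun x => f x + g x).
Proof. by move=> hf hg x y; rewrite hf hg addrACA. Qed.

Lemma addf_scale f c : addf f -> addf (fun x => f x * c).
Proof. by move=> hf x y; rewrite hf mulrDl. Qed.

Lemma addf_opp f : addf f -> addf (fun x => - f x).
Proof. by move=> hf x y; rewrite hf opprD. Qed.

Lemma addf_sumf (T : Type) (r : seq T) (F : T -> S -> int) :
  (forall t, addf (F t)) -> addf (fun x => \sum_(t <- r) F t x).
Proof. by move=> h x y; rewrite -big_split; apply: eq_bigr => t _; rewrite h. Qed.

Definition spanL L x := exists c : S -> int, x = \sum_(u <- L) u *~ c u.

Lemma span0 L : spanL L 0.
Proof. by exists (fun _ => 0); rewrite big1 // => u _; rewrite mulr0z. Qed.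

Lemma spanD L x y : spanL L x -> spanL L y -> spanL L (x + y).
Proof.
move=> [c ->] [d ->]; exists (fun u => c u + d u).
by rewrite -big_split; apply: eq_bigr => u _; rewrite mulrzDr.
Qed.

Lemma spanMz L x n : spanL L x -> spanL L (x *~ n).
Proof.
move=> [c ->]; exists (fun u => c u * n); rewrite sum_mulz.
by apply: eq_bigr => u _; rewrite mulrzA.
Qed.

Lemma spanN L x : spanL L x -> spanL L (- x).
Proof. by move=> h; rewrite -mulrN1z; apply: spanMz. Qed.

Lemma spanB L x y : spanL L x -> spanL L y -> spanL L (x - y).
Proof. by move=> hx hy; apply: spanD => //; apply: spanN. Qed.

Lemma span_sum L (T : Type) (r : seq T) (F : T -> S) :
  (forall t, spanL L (F t)) -> spanL L (\sum_(t <- r) F t).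
Proof.
move=> h; elim: r => [|t r IH]; first by rewrite big_nil; apply: span0.
by rewrite big_cons; apply: spanD.
Qed.

Lemma span_mem L u : uniq L -> u \in L -> spanL L u.
Proof.
move=> uL uin; exists (fun v => (v == u)%:R).
rewrite (sum_pred1 uL uin) ?eqxx ?mulr1z // => b _ /negbTE ->; by rewrite mulr0z.
Qed.

Lemma span_sub L1 L2 x : uniq L1 -> uniq L2 -> {subset L1 <= L2} ->
  spanL L1 x -> spanL L2 x.
Proof.
move=> u1 u2 sub [c ->]; exists (fun v => if v \in L1 then c v else 0).
rewrite [RHS](@sum_supp_eq _ _ L2 L1 (fun v => v *~ (if v \in L1 then c v else 0))) //.
- by apply: (@eq_big_seq S 0 +%R S) => b bin; rewrite bin.
- by move=> b _ /negbTE ->; rewrite mulr0z.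
- by move=> b bin; rewrite (sub _ bin).
Qed.

Lemma addf_span0 f L x : addf f -> (forall u, u \in L -> f u = 0) -> spanL L x -> f x = 0.
Proof.
move=> hf h [c ->]; rewrite addf_sum // big1_seq // => u /andP[_ uin].
by rewrite addfMz // h // mul0r.
Qed.

Definition freeL L (f : S -> S -> int) :=
  [/\ uniq L, (forall u, addf (f u)) &
      (forall u v, u \in L -> v \in L -> f u v = (u == v)%:R)].

Definition proj L f x := \sum_(u <- L) u *~ f u x.

Lemma free_coef L f c u : freeL L f -> u \in L ->
  f u (\sum_(v <- L) v *~ c v) = c u.
Proof.
case=> uL af fd uin; rewrite addf_sum //.
rewrite (sum_pred1 uL uin); first by rewrite addfMz // fd // eqxx mul1r.
by move=> b bin bu; rewrite addfMz // fd // eq_sym (negbTE bu) mul0r.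
Qed.

Lemma free_span_eq L f x : freeL L f -> spanL L x -> x = proj L f x.
Proof.
move=> fr [c ->]; rewrite /proj; apply: (@eq_big_seq S 0 +%R S) => u uin.
by rewrite free_coef.
Qed.

Lemma proj_span L f x : spanL L (proj L f x).
Proof. by exists (fun u => f u x). Qed.

Lemma f_proj L f x u : freeL L f -> u \in L -> f u (proj L f x) = f u x.
Proof. by move=> fr uin; rewrite /proj free_coef. Qed.

Lemma f_compl L f x u : freeL L f -> u \in L -> f u (x - proj L f x) = 0.
Proof. move=> fr uin; have [_ af _] := fr; by rewrite addfB // f_proj // subrr. Qed.

Lemma mulrz_sum (x : S) (T : Type) (r : seq T) (F : T -> int) :
  x *~ (\sum_(i <- r) F i) = \sum_(i <- r) x *~ F i.
Proof. by rewrite (big_morph (fun n => x *~ n) (fun m n => mulrzDr x m n) (mulr0z x)). Qed.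

Lemma rank_bound L f n (v : 'I_n -> S) : freeL L f -> Zindependent v ->
  (forall i, spanL L (v i)) -> (n <= size L)%N.
Proof.
move=> fr ind sp; rewrite leqNgt; apply/negP => lt.
have [c [[i ci] hc]] := int_dep (fun i (j : 'I_(size L)) => f (nth 0 L j) (v i)) lt.
have : \sum_(i < n) v i *~ c i = 0.
  transitivity (\sum_(i < n) \sum_(u <- L) u *~ (f u (v i) * c i)).
    apply: eq_bigr => i' _; rewrite {1}(free_span_eq fr (sp i')) /proj sum_mulz.
    by apply: eq_bigr => u _; rewrite mulrzA.
  rewrite exchange_big /= big1_seq // => u /andP[_ uin].
  rewrite -mulrz_sum.
  have iu : (index u L < size L)%N by rewrite index_mem.
  have := hc (Ordinal iu); rewrite /= nth_index // => h.
  by rewrite (eq_bigr (fun i' => c i' * f u (v i'))) ?h ?mulr0z // => i' _; rewrite mulrC.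
by move/ind => /(_ i) ci0; rewrite ci0 eqxx in ci.
Qed.

End Gen.

Section Basis.
Variable S : zmodType.
Variable Bp : S -> Prop.
Hypothesis Bind : forall n (v : 'I_n -> S), injective v -> (forall i, Bp (v i)) -> Zindependent v.
Hypothesis Bspan : forall x : S, exists n (v : 'I_n -> S) (c : 'I_n -> int),
  (forall i, Bp (v i)) /\ x = \sum_(i < n) v i *~ c i.
Hypothesis Binf : forall n (v : 'I_n -> S), exists b, Bp b /\ forall i, v i <> b.
Implicit Types (L s : seq S) (f : S -> S -> int) (g : S -> int) (x y e w : S).

Definition isrep (r : seq (S * int)) x :=
  (forall p, p \in r -> Bp p.1) /\ x = \sum_(p <- r) p.1 *~ p.2.
Definition coef b (r : seq (S * int)) := \sum_(p <- r | p.1 == b) p.2.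

Lemma rep_ex x : exists r, isrep r x.
Proof.
have [n [v [c [hB ->]]]] := Bspan x.
exists [seq (v i, c i) | i <- index_enum 'I_n]; split.
  by move=> p /mapP[i _ ->]; apply: hB.
by rewrite big_map.
Qed.

Lemma coef_cons b p r : coef b (p :: r) = (p.1 == b)%:R * p.2 + coef b r.
Proof. by rewrite /coef big_cons; case: eqP => _; rewrite ?mul1r ?mul0r ?add0r. Qed.

Lemma coef_cat b r1 r2 : coef b (r1 ++ r2) = coef b r1 + coef b r2.
Proof. by rewrite /coef big_cat. Qed.

Lemma regroup U r : uniq U -> (forall p, p \in r -> p.1 \in U) ->
  \sum_(p <- r) p.1 *~ p.2 = \sum_(b <- U) b *~ coef b r.
Proof.
move=> uU; elim: r => [|p r IH] h.
  by rewrite big_nil big1 // => b _; rewrite /coef big_nil mulr0z.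
rewrite big_cons IH; last by move=> q qr; apply: h; rewrite inE qr orbT.
under [RHS]eq_bigr do rewrite coef_cons mulrzDr.
rewrite big_split /=; congr (_ + _).
rewrite (sum_pred1 (u := p.1)) ?eqxx ?mul1r //; first by apply: h; rewrite inE eqxx.
by move=> b _ bp; rewrite eq_sym (negbTE bp) mul0r mulr0z.
Qed.

Lemma coef_unique r1 r2 x b : isrep r1 x -> isrep r2 x -> coef b r1 = coef b r2.
Proof.
move=> [h1 e1] [h2 e2].
set U := undup (map fst (r1 ++ r2)).
have uU : uniq U := undup_uniq _.
have inU1 : forall p, p \in r1 -> p.1 \in U.
  by move=> p pr; rewrite mem_undup map_f // mem_cat pr.
have inU2 : forall p, p \in r2 -> p.1 \in U.
  by move=> p pr; rewrite mem_undup map_f // mem_cat pr orbT.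
have hsum : \sum_(b <- U) b *~ (coef b r1 - coef b r2) = 0.
  under eq_bigr do rewrite mulrzBr.
  by rewrite sumrB -!regroup // -e1 -e2 subrr.
case: (boolP (b \in U)) => bU; last first.
  rewrite /coef !big1_seq // => p /andP[/eqP pb pr]; exfalso; move: bU; rewrite -pb.
    by rewrite inU2.
  by rewrite inU1.
have uB : forall i : 'I_(size U), Bp (nth 0 U i).
  move=> i; have := mem_nth 0 (ltn_ord i); rewrite mem_undup => /mapP[p].
  by rewrite mem_cat => /orP[] pr ->; [apply: h1 | apply: h2].
have inj : injective (fun i : 'I_(size U) => nth 0 U i).
  by move=> i j /eqP; rewrite nth_uniq // => /eqP/val_inj.
have := Bind inj uB.
move=> /(_ (fun i => coef (nth 0 U i) r1 - coef (nth 0 U i) r2)).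
rewrite (big_nth 0) big_mkord in hsum.
have ib : (index b U < size U)%N by rewrite index_mem.
move=> /(_ hsum (Ordinal ib)) /=.
by rewrite (nth_index 0 bU) => /eqP; rewrite subr_eq0 => /eqP.
Qed.

Definition rep x : seq (S * int) :=
  proj1_sig (constructive_indefinite_description _ (rep_ex x)).
Lemma repP x : isrep (rep x) x.
Proof. exact: (proj2_sig (constructive_indefinite_description _ (rep_ex x))). Qed.

Definition coord (b x : S) := coef b (rep x).

Lemma coord_rep r x b : isrep r x -> coord b x = coef b r.
Proof. by move=> h; apply: coef_unique (repP x) h. Qed.

Lemma coord_add b : addf (coord b).
Proof.
move=> x y; rewrite (@coord_rep (rep x ++ rep y)) ?coef_cat //.
have [h1 e1] := repP x; have [h2 e2] := repP y.
split; first by move=> p; rewrite mem_cat => /orP[]; [apply: h1 | apply: h2].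
by rewrite big_cat -e1 -e2.
Qed.

Lemma coord_basis b u : Bp u -> coord b u = (u == b)%:R.
Proof.
move=> hu; rewrite (@coord_rep [:: (u, 1)]) ?coef_cons /coef ?big_nil ?addr0 ?mulr1 //.
by split; [move=> p; rewrite inE => /eqP -> | rewrite big_seq1 mulr1z].
Qed.

Definition supp x := undup (map fst (rep x)).

Lemma supp_uniq x : uniq (supp x).
Proof. exact: undup_uniq. Qed.

Lemma supp_basis x b : b \in supp x -> Bp b.
Proof. by rewrite mem_undup => /mapP[p pr ->]; have [h _] := repP x; apply: h. Qed.

Lemma coord_nsupp x b : b \notin supp x -> coord b x = 0.
Proof.
move=> nb; rewrite /coord /coef big1_seq // => p /andP[/eqP pb pr].
by exfalso; move: nb; rewrite -pb mem_undup map_f.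
Qed.

Lemma supp_eq x : x = \sum_(b <- supp x) b *~ coord b x.
Proof.
have [h e] := repP x; rewrite {1}e (regroup (U := supp x)) ?supp_uniq //.
by move=> p pr; rewrite mem_undup map_f.
Qed.

Lemma span_coords E x : uniq E -> (forall b, Bp b -> b \notin E -> coord b x = 0) ->
  spanL E x.
Proof.
move=> uE h; exists (coord ^~ x); rewrite {1}(supp_eq x).
apply: sum_supp_eq; rewrite ?supp_uniq //.
  by move=> b bs bE; rewrite h ?mulr0z //; apply: supp_basis bs.
by move=> b _ bs; rewrite coord_nsupp ?mulr0z.
Qed.

Definition basisL E := uniq E /\ forall u, u \in E -> Bp u.

Lemma coord_span0 E x b : basisL E -> spanL E x -> b \notin E -> coord b x = 0.
Proof.
move=> [uE bE] sx nb; apply: (addf_span0 (coord_add b) _ sx) => u uin.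
rewrite coord_basis; last exact: bE.
case: (boolP (u == b)) => [/eqP eub| //].
by move: nb; rewrite -eub uin.
Qed.

Lemma basis_free E : basisL E -> freeL E coord.
Proof.
move=> [uE bE]; split => //; first exact: coord_add.
by move=> u v uin vin; rewrite coord_basis; [rewrite eq_sym | exact: bE].
Qed.

Lemma fresh (E : seq S) : exists b, Bp b /\ b \notin E.
Proof.
have [b [hb hn]] := Binf (fun i : 'I_(size E) => nth 0 E i).
exists b; split => //; apply/negP => bin.
have ib : (index b E < size E)%N by rewrite index_mem.
by apply: (hn (Ordinal ib)); rewrite /= nth_index.
Qed.

Lemma cover (X : seq S) : exists E, basisL E /\ forall x, x \in X -> spanL E x.
Proof.
exists (undup (flatten (map supp X))); split.
  split; first exact: undup_uniq.
  by move=> u; rewrite mem_undup => /flatten_mapP[x _]; apply: supp_basis.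
move=> x xX; apply: span_coords; first exact: undup_uniq.
move=> b hb nb; apply: coord_nsupp; apply/negP => bs; move/negP: nb; apply.
by rewrite mem_undup; apply/flatten_mapP; exists x.
Qed.

Lemma fresh_list k E : basisL E -> exists H, size H = k /\ basisL (E ++ H).
Proof.
move=> bE; elim: k => [|k [H [sH [uEH bEH]]]]; first by exists [::]; rewrite cats0.
have [b [hb nb]] := fresh (E ++ H).
exists (rcons H b); rewrite size_rcons sH; split => //.
rewrite -rcons_cat; split; first by rewrite rcons_uniq nb uEH.
by move=> u; rewrite mem_rcons inE => /orP[/eqP -> //|]; apply: bEH.
Qed.

Definition gll (U : seq S) (a : S -> int) : int := foldr (fun b (g : int) => gcdz (a b) g) (0 : int) U.

Lemma gll_dvd U a b : b \in U -> (gll U a %| a b)%Z.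
Proof.
elim: U => [//|b0 U IH]; rewrite inE => /orP[/eqP ->|bU] /=; first exact: dvdz_gcdl.
by apply: dvdz_trans (dvdz_gcdr _ _) (IH bU).
Qed.

Lemma gll_eq0 U a b : gll U a = 0 -> b \in U -> a b = 0.
Proof.
elim: U => [//|b0 U IH] /= /eqP; rewrite gcdz_eq0 => /andP[/eqP h0 /eqP h1].
by rewrite inE => /orP[/eqP ->|bU] //; apply: IH.
Qed.

Lemma gll_bez U a : uniq U -> exists beta : S -> int, \sum_(b <- U) beta b * a b = gll U a.
Proof.
elim: U => [_|b0 U IH] /=; first by exists (fun _ => 0); rewrite big_nil.
move=> /andP[nb uU]; have [beta hb] := IH uU.
have [u [v huv]] := Bezoutz (a b0) (gll U a).
exists (fun x => if x == b0 then u else v * beta x).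
rewrite big_cons eqxx -huv; congr (_ + _).
rewrite -hb mulr_sumr; apply: (@eq_big_seq int 0 +%R S) => b bU.
by rewrite ifN ?mulrA //; apply/negP => /eqP eb; move: nb; rewrite -eb bU.
Qed.

Lemma prim_dec q : q != 0 -> exists (e : S) (g : int) (phi : S -> int),
  [/\ addf phi, phi e = 1, q = e *~ g & g != 0].
Proof.
move=> nq; set U := supp q; set a := coord ^~ q.
have bU : basisL U by split; [apply: supp_uniq | move=> u; apply: supp_basis].
set g := gll U a.
have g0 : g != 0.
  apply/negP => /eqP g0; move/negP: nq; apply; apply/eqP.
  rewrite (supp_eq q) big1_seq // => b /andP[_ bin].
  by rewrite -/(a b) (gll_eq0 g0 bin) mulr0z.
have [beta hbeta] := gll_bez a (supp_uniq q).
set e := \sum_(b <- U) b *~ (a b %/ g)%Z.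
exists e, g, (fun x => \sum_(b <- U) beta b * coord b x); split => //.
- by move=> x y; rewrite -big_split; apply: eq_bigr => b _; rewrite coord_add mulrDr.
- have hg : g = \sum_(b <- U) beta b * a b by rewrite hbeta.
  apply: (mulIf g0); rewrite mul1r {2}hg mulr_suml.
  apply: (@eq_big_seq int 0 +%R S) => b bin.
  rewrite /e (free_coef _ (basis_free bU) bin) -mulrA divzK //; exact: gll_dvd.
- rewrite /e sum_mulz {1}(supp_eq q); apply: (@eq_big_seq S 0 +%R S) => b bin.
  by rewrite -mulrzA divzK //; exact: gll_dvd.
Qed.

Lemma torsion (x : S) (c : int) : x *~ c = 0 -> c != 0 -> x = 0.
Proof.
move=> h c0; apply/eqP; apply/negPn/negP => nx.
have [e [g [phi [af pe xe g0]]]] := prim_dec nx.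
have : phi (x *~ c) = 0 by rewrite h addf0.
rewrite addfMz // xe addfMz // pe mul1r => /eqP; rewrite mulf_eq0.
by rewrite (negbTE g0) (negbTE c0).
Qed.

Section SG.
Variable G : S -> Prop.
Hypothesis sG : subgroup G.

Lemma sg0 : G 0. Proof. by case: sG. Qed.
Lemma sgD x y : G x -> G y -> G (x + y). Proof. by case: sG => _ [h _]; apply: h. Qed.
Lemma sgN x : G x -> G (- x). Proof. by case: sG => _ [_ h]; apply: h. Qed.
Lemma sgB x y : G x -> G y -> G (x - y). Proof. by move=> hx hy; apply: sgD => //; apply: sgN. Qed.
Lemma sg_mulz x c : G x -> G (x *~ c).
Proof.
move=> hx; have hn : forall n : nat, G (x *~ n).
  elim=> [|n IH]; first by rewrite mulr0z; exact: sg0.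
  by rewrite -[x *~ _]/(x *+ n.+1) mulrS; apply: sgD.
case: c => n; first exact: hn.
by rewrite NegzE mulrNz; apply: sgN.
Qed.
Lemma sg_sum (r : seq S) (F : S -> S) : (forall t, t \in r -> G (F t)) ->
  G (\sum_(t <- r) F t).
Proof.
elim: r => [|t r IH] h; first by rewrite big_nil; exact: sg0.
rewrite big_cons; apply: sgD; first by apply: h; rewrite inE eqxx.
by apply: IH => u ur; apply: h; rewrite inE ur orbT.
Qed.
Lemma sg_span L x : (forall u, u \in L -> G u) -> spanL L x -> G x.
Proof. by move=> h [c ->]; apply: sg_sum => u uin; apply: sg_mulz; apply: h. Qed.

End SG.

Lemma purity (G : S -> Prop) (e : S) (c : int) : subgroup G -> direct_summand G -> G (e *~ c) -> c != 0 -> G e.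
Proof.
move=> sG [C [sC [hI hD]]] he c0.
have [a [k [Ga [Ck ek]]]] := hD e.
suff k0 : k = 0 by rewrite ek k0 addr0.
apply: (torsion _ c0); apply: hI.
  have -> : k *~ c = e *~ c - a *~ c by rewrite ek mulrzDl addrAC subrr add0r.
  by apply: sgB => //; apply: sg_mulz.
exact: sg_mulz.
Qed.


Lemma spanE_in_I E : basisL E -> in_I (spanL E).
Proof.
move=> bE; split; [|split].
- split; first exact: span0.
  by split; [apply: spanD | apply: spanN].
- by exists (size E) => n v hv ind; apply: rank_bound (basis_free bE) ind hv.
- exists (fun x => forall u, u \in E -> coord u x = 0); split; [|split].
  + split; first by move=> u _; rewrite addf0 //; apply: coord_add.
    split; first by move=> x y hx hy u uin; rewrite coord_add hx ?hy ?addr0.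
    by move=> x hx u uin; rewrite addfN ?hx ?oppr0 //; apply: coord_add.
  + move=> x sx cx; rewrite (free_span_eq (basis_free bE) sx) /proj.
    by rewrite big1_seq // => u /andP[_ uin]; rewrite cx // mulr0z.
  + move=> x; exists (proj E coord x), (x - proj E coord x); split.
      exact: proj_span.
    split; last by rewrite addrC subrK.
    by move=> u uin; apply: f_compl => //; apply: basis_free.
Qed.

Lemma max_indep (A : S -> Prop) : finite_rank A ->
  exists n (v : 'I_n -> S), [/\ (forall i, A (v i)), Zindependent v &
    forall w : 'I_n.+1 -> S, (forall i, A (w i)) -> ~ Zindependent w].
Proof.
move=> [N hN]; apply: NNPP => H.
have P : forall n, exists v : 'I_n -> S, (forall i, A (v i)) /\ Zindependent v.
  elim=> [|n [v [hv iv]]].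
    by exists (fun _ => 0); split => [[]|c _ []].
  apply: NNPP => H2; apply: H; exists n, v; split => // w hw iw.
  by apply: H2; exists w.
have [v [hv iv]] := P N.+1.
by have := hN _ v hv iv; rewrite ltnn.
Qed.

Lemma A_sub_span (A : S -> Prop) : in_I A ->
  exists E, basisL E /\ forall a, A a -> spanL E a.
Proof.
move=> [sA [fA dA]].
have [n [v [hv iv hmax]]] := max_indep fA.
have [E [bE hE]] := cover [seq v i | i <- enum 'I_n].
have vE : forall i, spanL E (v i) by move=> i; apply: hE; rewrite map_f ?mem_enum.
exists E; split => // a ha.
pose w (i : 'I_n.+1) := oapp v a (insub (val i) : option 'I_n).
have ww : forall j, w (widen_ord (leqnSn n) j) = v j by move=> j; rewrite /w /= valK.
have wm : w ord_max = a by rewrite /w /= insubN ?ltnn.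
have hw : forall i, A (w i).
  by move=> i; rewrite /w; case: insub => [j|] /=; [apply: hv | apply: ha].
have nw := hmax w hw.
have [c [hc [i0 ci0]]] : exists c : 'I_n.+1 -> int,
    \sum_(i < n.+1) w i *~ c i = 0 /\ exists i, c i != 0.
  apply: NNPP => H; apply: nw => c hc i; apply/eqP; apply/negPn/negP => ci.
  by apply: H; exists c; split => //; exists i.
rewrite big_ord_recr /= wm in hc.
have cm : c ord_max != 0.
  apply/negP => /eqP cm0; move: hc; rewrite cm0 mulr0z addr0 => hc.
  have hc' : \sum_(j < n) v j *~ c (widen_ord (leqnSn n) j) = 0.
    by rewrite -[RHS]hc; apply: eq_bigr => j _; rewrite ww.
  have := iv (fun j => c (widen_ord (leqnSn n) j)) hc'.
  case: (ltnP (val i0) n) => [lt|ge] h.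
    have e : widen_ord (leqnSn n) (Ordinal lt) = i0 by apply: val_inj.
    by move: ci0; rewrite -e h eqxx.
  have : i0 = ord_max by apply: val_inj => /=; apply/eqP; rewrite eqn_leq ge -ltnS ltn_ord.
  by move=> e; move: ci0; rewrite e cm0 eqxx.
have sa : spanL E (a *~ c ord_max).
  have -> : a *~ c ord_max = - \sum_(i < n) v i *~ c (widen_ord (leqnSn n) i).
    apply/eqP; rewrite -addr_eq0 addrC; apply/eqP.
    by rewrite -[RHS]hc; congr (_ + _); apply: eq_bigr => j _; rewrite ww.
  apply: spanN; rewrite -big_enum /=; apply: span_sum => j; exact: spanMz.
apply: span_coords; first by case: bE.
move=> b hb nb; have h := coord_span0 bE sa nb.
rewrite addfMz in h; last exact: coord_add.
by move/eqP: h; rewrite mulf_eq0 (negbTE cm) orbF => /eqP.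
Qed.

Definition auto (sg : S -> S) :=
  (forall x y, sg (x + y) = sg x + sg y) /\ exists tau, cancel sg tau /\ cancel tau sg.

Lemma auto_comp (s1 s2 : S -> S) : auto s1 -> auto s2 -> auto (s2 \o s1).
Proof.
move=> [a1 [t1 [c1 d1]]] [a2 [t2 [c2 d2]]]; split; first by move=> x y /=; rewrite a1 a2.
by exists (t1 \o t2); split => x /=; rewrite ?c2 ?c1 ?d1 ?d2.
Qed.

Definition transv (phi : S -> int) (z : S) := fun x => x + z *~ phi x.

Lemma transv_auto phi z : addf phi -> phi z = 0 -> auto (transv phi z).
Proof.
move=> af pz; split.
  by move=> x y; rewrite /transv af mulrzDr addrACA.
exists (fun x => x - z *~ phi x); split => x; rewrite /transv.
  by rewrite af addfMz // pz mul0r addr0 addrK.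
by rewrite addfB // addfMz // pz mul0r subr0 subrK.
Qed.

Lemma transv_fix phi z x : phi x = 0 -> transv phi z x = x.
Proof. by move=> h; rewrite /transv h mulr0z addr0. Qed.

Lemma move_prim (L : seq S) (e w : S) (ge gw : S -> int) :
  addf ge -> addf gw -> ge e = 1 -> gw w = 1 ->
  (forall u, u \in L -> ge u = 0) -> (forall u, u \in L -> gw u = 0) ->
  exists sg, [/\ auto sg, sg e = w & forall x, spanL L x -> sg x = x].
Proof.
move=> age agw ge1 gw1 geL gwL.
have [E [bE hE]] := cover (e :: w :: L).
have [b [hb nb]] := fresh E.
set h := coord b.
have ah : addf h := coord_add b.
have h0 : forall x, x \in e :: w :: L -> h x = 0.
  by move=> x xin; apply: (coord_span0 bE (hE x xin) nb).
have he : h e = 0 by apply: h0; rewrite inE eqxx.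
have hw : h w = 0 by apply: h0; rewrite !inE eqxx orbT.
have hL : forall u, u \in L -> h u = 0 by move=> u uin; apply: h0; rewrite !inE uin !orbT.
have hb1 : h b = 1 by rewrite /h coord_basis // eqxx.
set phi1 := fun x => ge x - ge b * h x.
set phi4 := fun x => gw x - gw b * h x.
have a1 : addf phi1.
  by move=> x y; rewrite /phi1 age ah mulrDr opprD addrACA.
have a4 : addf phi4.
  by move=> x y; rewrite /phi4 agw ah mulrDr opprD addrACA.
set T1 := transv phi1 b; set T2 := transv h (- e); set T3 := transv h w.
set T4 := transv phi4 (- b).
exists (T4 \o T3 \o T2 \o T1); split.
- have z1 : phi1 b = 0 by rewrite /phi1 hb1 mulr1 subrr.
  have z4 : phi4 (- b) = 0 by rewrite addfN // /phi4 hb1 mulr1 subrr oppr0.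
  have z2 : h (- e) = 0 by rewrite addfN // he oppr0.
  apply: (auto_comp (transv_auto a1 z1)).
  apply: (auto_comp (transv_auto ah z2)).
  apply: (auto_comp (transv_auto ah hw)).
  exact: (transv_auto a4 z4).
- have s1 : T1 e = e + b by rewrite /T1 /transv /phi1 he mulr0 subr0 ge1 mulr1z.
  have s2 : T2 (e + b) = b.
    by rewrite /T2 /transv ah he hb1 add0r mulNrz mulr1z addrAC subrr add0r.
  have s3 : T3 b = b + w by rewrite /T3 /transv hb1 mulr1z.
  have s4 : T4 (b + w) = w.
    rewrite /T4 /transv a4 /phi4 gw1 hw hb1 mulr1 subrr add0r.
    by rewrite mulr0 subr0 mulNrz mulr1z addrAC subrr add0r.
  by rewrite /= s1 s2 s3 s4.
- move=> x sx.
  have hx : h x = 0 by apply: (addf_span0 ah hL sx).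
  have p1 : phi1 x = 0 by rewrite /phi1 hx mulr0 subr0 (addf_span0 age geL sx).
  have p4 : phi4 x = 0 by rewrite /phi4 hx mulr0 subr0 (addf_span0 agw gwL sx).
  by rewrite /= /T1 transv_fix // /T2 transv_fix // /T3 transv_fix // /T4 transv_fix.
Qed.

Definition killf (L : seq S) (f : S -> S -> int) (g : S -> int) :=
  fun x => g x - \sum_(u <- L) g u * f u x.

Lemma killf_add L f g : freeL L f -> addf g -> addf (killf L f g).
Proof.
move=> [_ af _] ag x y; rewrite /killf ag.
rewrite (eq_bigr (fun u => g u * f u x + g u * f u y)); last by move=> u _; rewrite af mulrDr.
by rewrite big_split /= opprD addrACA.
Qed.

Lemma killf_L L f g v : freeL L f -> v \in L -> killf L f g v = 0.
Proof.
move=> [uL af fd] vin; rewrite /killf (sum_pred1 uL vin).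
  by rewrite fd // eqxx mulr1 subrr.
by move=> b bin bv; rewrite fd // (negbTE bv) mulr0.
Qed.

Lemma killf_C L f g x : (forall u, u \in L -> f u x = 0) -> killf L f g x = g x.
Proof.
move=> h; rewrite /killf big1_seq ?subr0 // => u /andP[_ uin]; by rewrite h // mulr0.
Qed.

Lemma extend_free L f e g : freeL L f -> (forall u, u \in L -> f u e = 0) ->
  addf g -> g e = 1 ->
  exists f', freeL (L ++ [:: e]) f' /\ (forall u, u \in L -> f' u = f u).
Proof.
move=> fr fe ag ge.
have [uL af fd] := fr.
have nL : e \notin L.
  by apply/negP => ein; move: (fe e ein); rewrite fd // eqxx.
exists (fun u => if u == e then killf L f g else f u); split; last first.
  by move=> u uin; case: eqP => // ue; move: nL; rewrite -ue uin.
split.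
- by rewrite cat_uniq uL /= orbF nL.
- by move=> u; case: eqP => _; [apply: killf_add | apply: af].
- move=> u v; rewrite !mem_cat !inE => /orP[uin|/eqP ->] /orP[vin|/eqP ->].
  + have -> : (u == e) = false by apply/negP => /eqP ue; move: nL; rewrite -ue uin.
    exact: fd.
  + have -> : (u == e) = false by apply/negP => /eqP ue; move: nL; rewrite -ue uin.
    by rewrite fe // eq_sym; case: eqP => // ue; move: nL; rewrite ue uin.
  + rewrite eqxx killf_L //; case: eqP => // ev; move: nL; rewrite ev vin //.
  + by rewrite eqxx killf_C // ge.
Qed.

Lemma span_ext L e y : uniq (L ++ [:: e]) ->
  (spanL (L ++ [:: e]) y <-> exists y' b, spanL L y' /\ y = y' + e *~ b).
Proof.
move=> u; split.
  by move=> [c ->]; exists (\sum_(u <- L) u *~ c u), (c e); rewrite big_cat big_seq1; split => //; exists c.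
move=> [y' [b [[c ->] ->]]].
have nL : e \notin L by move: u; rewrite cat_uniq /= orbF => /and3P[_ h _].
exists (fun v => if v == e then b else c v); rewrite big_cat big_seq1 eqxx; congr (_ + _).
apply: (@eq_big_seq S 0 +%R S) => v vin; case: eqP => // ve; move: nL; rewrite -ve vin //.
Qed.

Definition indep_mod (P : S -> Prop) (s : seq S) :=
  uniq s /\ forall c : S -> int, P (\sum_(x <- s) x *~ c x) -> forall x, x \in s -> c x = 0.

Lemma ext0_sum s x0 (c : S -> int) : uniq s -> x0 \in s ->
  \sum_(x <- s) x *~ (if x == x0 then 0 else c x) = \sum_(x <- rem x0 s) x *~ c x.
Proof.
move=> us xin; rewrite (big_rem x0) //= eqxx mulr0z add0r.
apply: (@eq_big_seq S 0 +%R S) => x; rewrite mem_rem_uniq // => /andP[/negbTE -> _] //.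
Qed.

Lemma indep_rem P s x0 : indep_mod P s -> x0 \in s -> indep_mod P (rem x0 s).
Proof.
move=> [us h] xin; split; first exact: rem_uniq.
move=> c hc x; rewrite mem_rem_uniq // => /andP[xx0 xs].
have := h (fun x => if x == x0 then 0 else c x); rewrite ext0_sum // => /(_ hc x xs).
by rewrite (negbTE xx0).
Qed.

Lemma exchange L e s : uniq (L ++ [:: e]) -> indep_mod (spanL L) s -> s != [::] ->
  exists x0, x0 \in s /\ indep_mod (spanL (L ++ [:: e])) (rem x0 s).
Proof.
move=> uLe [us hs] sn.
have uL : uniq L by move: uLe; rewrite cat_uniq => /andP[].
case: (classic (indep_mod (spanL (L ++ [:: e])) s)) => hi.
  by case: s sn {hs} us hi => // x s' _ _ hi; exists x; split; [rewrite inE eqxx | apply: indep_rem => //; rewrite inE eqxx].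
have [c [hc [x0 [x0s cx0]]]] : exists c : S -> int, spanL (L ++ [:: e]) (\sum_(x <- s) x *~ c x)
    /\ exists x0, x0 \in s /\ c x0 != 0.
  apply: NNPP => H; apply: hi; split => // c hc x xs; apply/eqP; apply/negPn/negP => cx.
  by apply: H; exists c; split => //; exists x.
have [y' [b [sy' ey]]] := (span_ext _ uLe).1 hc.
have b0 : b != 0.
  apply/negP => /eqP b0; move: cx0; rewrite (hs c) ?eqxx //.
  by rewrite ey b0 mulr0z addr0.
exists x0; split => //; split; first exact: rem_uniq.
move=> c' hc'.
have [y'' [b' [sy'' ey']]] := (span_ext _ uLe).1 hc'.
set c'' := fun x => if x == x0 then 0 else c' x.
have e'' : \sum_(x <- s) x *~ c'' x = y'' + e *~ b' by rewrite ext0_sum.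
set d := fun x => c'' x * b - c x * b'.
have ed : \sum_(x <- s) x *~ d x = y'' *~ b - y' *~ b'.
  rewrite (eq_bigr (fun x => x *~ c'' x *~ b - x *~ c x *~ b')); last first.
    by move=> x _; rewrite /d mulrzBr !mulrzA.
  rewrite sumrB -!sum_mulz e'' ey !mulrzDl (mulrzAC _ b').
  by rewrite opprD addrACA subrr addr0.
have hd := hs d; rewrite ed in hd.
have dx0 := hd (spanB (spanMz b sy'') (spanMz b' sy')) x0 x0s.
have b'0 : b' = 0.
  by move: dx0; rewrite /d /c'' eqxx mul0r sub0r => /eqP; rewrite oppr_eq0 mulf_eq0 (negbTE cx0) /= => /eqP.
have hc0 : spanL L (\sum_(x <- s) x *~ c'' x) by rewrite e'' b'0 mulr0z addr0.
move=> x; rewrite mem_rem_uniq // => /andP[xx0 xs].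
by have := hs c'' hc0 x xs; rewrite /c'' (negbTE xx0).
Qed.

Lemma auto0 (sg : S -> S) : auto sg -> sg 0 = 0.
Proof. by move=> [a _]; apply: (addrI (sg 0)); rewrite -a !addr0. Qed.
Lemma autoN (sg : S -> S) x : auto sg -> sg (- x) = - sg x.
Proof. by move=> h; apply: (addrI (sg x)); have [a _] := h; rewrite -a !subrr auto0. Qed.
Lemma auto_mulz (sg : S -> S) x (c : int) : auto sg -> sg (x *~ c) = sg x *~ c.
Proof.
move=> h; have [a _] := h; have hn : forall n : nat, sg (x *~ n) = sg x *~ n.
  elim=> [|n IH]; first by rewrite !mulr0z auto0.
  by rewrite -[x *~ _]/(x *+ n.+1) -[_ *~ n.+1]/(_ *+ n.+1) !mulrS a; congr (_ + _); exact: IH.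
case: c => n; first exact: hn.
by rewrite !NegzE !mulrNz autoN // hn.
Qed.
Lemma auto_inj (sg : S -> S) : auto sg -> injective sg.
Proof. by move=> [_ [t [c _]]]; apply: can_inj c. Qed.

Definition TT := fun _ : S => True.

Lemma teval_auto (sg : S -> S) (env : nat -> S) (t : term S) : auto sg -> term_consts_in (fun c => sg c = c) t ->
  term_eval (sg \o env) t = sg (term_eval env t).
Proof.
move=> h; elim: t => [n _|a ha|_|t1 IH1 t2 IH2 [h1 h2]|t1 IH1 h1] /=.
- by [].
- by rewrite ha.
- by rewrite auto0.
- by rewrite IH1 // IH2 //; case: h => a _; rewrite a.
- by rewrite IH1 // autoN.
Qed.

Lemma upd_comp (sg : S -> S) (env : nat -> S) (n : nat) (x : S) : sg \o upd env n x = upd (sg \o env) n (sg x).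
Proof. by apply: functional_extensionality => m; rewrite /upd /=; case: eqP. Qed.

Lemma holds_auto (sg : S -> S) (phi : formula S) (env : nat -> S) : auto sg -> consts_in (fun c => sg c = c) phi ->
  (holds TT env phi <-> holds TT (sg \o env) phi).
Proof.
move=> ha; have [_ [tau [c1 c2]]] := ha.
elim: phi env => [t1 t2|| g IH| g IHg h IHh| g IHg h IHh| g IHg h IHh| n g IH| n g IH] env /=.
- move=> [h1 h2]; rewrite !teval_auto //; split; first by move=> ->.
  by apply: auto_inj.
- by [].
- by move=> hc; rewrite IH.
- by move=> [hg hh]; rewrite IHg // IHh.
- by move=> [hg hh]; rewrite IHg // IHh.
- by move=> [hg hh]; rewrite IHg // IHh.
- move=> hc; split => H x _.
    by have := (IH (upd env n (tau x)) hc).1 (H _ I); rewrite upd_comp c2.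
  by apply/(IH _ hc); rewrite upd_comp; apply: H.
- move=> hc; split => [[x [_ H]]|[x [_ H]]].
    exists (sg x); split; first by [].
    by rewrite -upd_comp; apply: (IH (upd env n x) hc).1.
  exists (tau x); split; first by [].
  by apply: (IH (upd env n (tau x)) hc).2; rewrite upd_comp c2.
Qed.

Fixpoint qd (phi : formula S) : nat :=
  match phi with
  | fEq _ _ | fFalse => 0
  | fNot g => qd g
  | fAnd g h | fOr g h | fImp g h => maxn (qd g) (qd h)
  | fAll _ g | fEx _ g => (qd g).+1
  end.

Fixpoint tconsts (t : term S) : seq S :=
  match t with
  | tConst a => [:: a]
  | tAdd t1 t2 => tconsts t1 ++ tconsts t2
  | tNeg t1 => tconsts t1
  | _ => [::]
  end.

Fixpoint fconsts (phi : formula S) : seq S :=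
  match phi with
  | fEq t1 t2 => tconsts t1 ++ tconsts t2
  | fFalse => [::]
  | fNot g | fAll _ g | fEx _ g => fconsts g
  | fAnd g h | fOr g h | fImp g h => fconsts g ++ fconsts h
  end.

Lemma tconsts_in (P : S -> Prop) (t : term S) : (forall c, c \in tconsts t -> P c) ->
  term_consts_in P t.
Proof.
elim: t => [n|a||t1 IH1 t2 IH2|t1 IH1] h /=.
- by [].
- by apply: h; rewrite inE eqxx.
- by [].
- by split; [apply: IH1 | apply: IH2] => c cin; apply: h; rewrite mem_cat cin ?orbT.
- exact: IH1.
Qed.

Lemma fconsts_in (P : S -> Prop) (phi : formula S) : (forall c, c \in fconsts phi -> P c) ->
  consts_in P phi.
Proof.
elim: phi => [t1 t2||g IH|g IHg h IHh|g IHg h IHh|g IHg h IHh|n g IH|n g IH] H /=;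
  try (by []); try (by apply: IH);
  try (by split; [apply: IHg | apply: IHh] => c cin; apply: H; rewrite mem_cat cin ?orbT).
by split; apply: tconsts_in => c cin; apply: H; rewrite mem_cat cin ?orbT.
Qed.

Lemma tconsts_mono (P Q : S -> Prop) (t : term S) : (forall c, P c -> Q c) ->
  term_consts_in P t -> term_consts_in Q t.
Proof.
move=> h; elim: t => [n|a||t1 IH1 t2 IH2|t1 IH1] /=; try by [].
- exact: h.
- by move=> [h1 h2]; split; [apply: IH1 | apply: IH2].
Qed.

Lemma consts_mono (P Q : S -> Prop) (phi : formula S) : (forall c, P c -> Q c) ->
  consts_in P phi -> consts_in Q phi.
Proof.
move=> h; elim: phi => [t1 t2||g IH|g IHg k IHk|g IHg k IHk|g IHg k IHk|n g IH|n g IH] /=;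
  try by []; try exact: IH; try by move=> [h1 h2]; split; [apply: IHg|apply: IHk].
by move=> [h1 h2]; split; apply: (tconsts_mono h).
Qed.

Record state (G : S -> Prop) L f (k : nat) s (env : nat -> S) : Prop := State {
  st_free : freeL L f; st_sg : subgroup G; st_ds : direct_summand G;
  st_LG : forall u, u \in L -> G u; st_env : forall m, spanL L (env m);
  st_ind : indep_mod (spanL L) s; st_size : size s = k; st_sG : forall x, x \in s -> G x }.

Lemma span_ext_sub L e y : uniq (L ++ [:: e]) -> spanL L y -> spanL (L ++ [:: e]) y.
Proof.
move=> u; apply: span_sub => //; first by move: u; rewrite cat_uniq => /andP[].
by move=> v vin; rewrite mem_cat vin.
Qed.

Lemma upd_span L (env : nat -> S) n x : spanL L x -> (forall m, spanL L (env m)) ->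
  forall m, spanL L (upd env n x m).
Proof. by move=> hx he m; rewrite /upd; case: eqP. Qed.

Lemma extend_state G L f k s env env' e g : state G L f k.+1 s env ->
  (forall u, u \in L -> f u e = 0) -> addf g -> g e = 1 -> G e ->
  (forall m, spanL (L ++ [:: e]) (env' m)) ->
  exists f' s', state G (L ++ [:: e]) f' k s' env'.
Proof.
move=> st fe ag ge Ge he.
have [f' [fr' _]] := extend_free (st_free st) fe ag ge.
have uLe : uniq (L ++ [:: e]) by case: fr'.
have sn : s != [::] by apply/negP => /eqP s0; have := st_size st; rewrite s0.
have [x0 [x0s ind']] := exchange uLe (st_ind st) sn.
exists f', (rem x0 s); split => //.
- exact: st_sg st.
- exact: st_ds st.
- by move=> u; rewrite mem_cat inE => /orP[/(st_LG st)|/eqP ->].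
- by rewrite size_rem // (st_size st).
- by move=> x /mem_rem /(st_sG st).
Qed.

Lemma drop_state G L f k s env env' : state G L f k.+1 s env ->
  (forall m, spanL L (env' m)) -> exists s', state G L f k s' env'.
Proof.
move=> st he.
have sn : s != [::] by apply/negP => /eqP s0; have := st_size st; rewrite s0.
case: s sn st => // x0 s' _ st.
have x0s : x0 \in x0 :: s' by rewrite inE eqxx.
exists (rem x0 (x0 :: s')); split => //.
- exact: st_free st.
- exact: st_sg st.
- exact: st_ds st.
- exact: st_LG st.
- exact: indep_rem (st_ind st) x0s.
- by rewrite size_rem // (st_size st).
- by move=> x /mem_rem /(st_sG st).
Qed.

Lemma dec_prim L f x : freeL L f -> x - proj L f x != 0 ->
  exists e (g : int) (phi : S -> int), [/\ addf phi, phi e = 1, x - proj L f x = e *~ g, g != 0 &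
    forall u, u \in L -> f u e = 0].
Proof.
move=> fr nq; have [e [g [phi [af pe qe g0]]]] := prim_dec nq.
exists e, g, phi; split => // u uin.
have := f_compl x fr uin; rewrite qe; have [_ afu _] := fr.
by rewrite addfMz // => /eqP; rewrite mulf_eq0 (negbTE g0) orbF => /eqP.
Qed.

Lemma G_step G L f k s env n x : state G L f k.+1 s env -> G x ->
  exists L' f' s', state G L' f' k s' (upd env n x) /\ (forall y, spanL L y -> spanL L' y).
Proof.
move=> st Gx; have fr := st_free st; set p := proj L f x.
have Gp : G p by apply: (sg_span (st_sg st) (st_LG st)); apply: proj_span.
case: (eqVneq (x - p) 0) => [q0|nq].
  have xp : x = p by apply/eqP; rewrite -subr_eq0 q0.
  have sxs : spanL L x by rewrite xp; apply: proj_span.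
  have [s' st'] := drop_state st (upd_span n sxs (st_env st)).
  by exists L, f, s'.
have [e [g [phi [af pe qe g0 fe]]]] := dec_prim fr nq.
have Gq : G (x - p) by apply: sgB => //; apply: st_sg st.
have Ge : G e by apply: (purity (st_sg st) (st_ds st) _ g0); rewrite -qe.
have uLe : uniq (L ++ [:: e]).
  by have [f' [[u _ _] _]] := extend_free fr fe af pe.
have sx : spanL (L ++ [:: e]) x.
  have -> : x = p + e *~ g by rewrite -qe addrC subrK.
  apply: spanD; first by apply: span_ext_sub => //; apply: proj_span.
  by apply: spanMz; apply: span_mem => //; rewrite mem_cat inE eqxx orbT.
have he : forall m, spanL (L ++ [:: e]) (upd env n x m).
  by apply: upd_span => // m; apply: span_ext_sub => //; exact: (st_env st m).
have [f' [s' st']] := extend_state st fe af pe Ge he.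
exists (L ++ [:: e]), f', s'; split => // y; exact: span_ext_sub.
Qed.

Lemma auto_id : auto id.
Proof. by split => //; exists id. Qed.

Lemma S_step G L f k s env n x : state G L f k.+1 s env ->
  exists sg, [/\ auto sg, (forall y, spanL L y -> sg y = y), G (sg x) &
    exists L' f' s', state G L' f' k s' (upd env n (sg x)) /\ (forall y, spanL L y -> spanL L' y)].
Proof.
move=> st; have fr := st_free st; set p := proj L f x.
have sgG := st_sg st.
have Gp : G p by apply: (sg_span sgG (st_LG st)); apply: proj_span.
case: (eqVneq (x - p) 0) => [q0|nq].
  have xp : x = p by apply/eqP; rewrite -subr_eq0 q0.
  have sxs : spanL L x by rewrite xp; apply: proj_span.
  have [s' st'] := drop_state st (upd_span n sxs (st_env st)).
  exists id; split => //; first exact: auto_id.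
  by rewrite /= xp.
  by exists L, f, s'.
have [e [g [phi [af pe qe g0 fe]]]] := dec_prim fr nq.
have sn : s != [::] by apply/negP => /eqP s0; have := st_size st; rewrite s0.
case: s sn st => // h1 s1 _ st.
have Gh1 : G h1 by apply: (st_sG st); rewrite inE eqxx.
have [us hind] := st_ind st.
set p1 := proj L f h1.
have nq1 : h1 - p1 != 0.
  apply/negP => /eqP q10.
  have hp : h1 = p1 by apply/eqP; rewrite -subr_eq0 q10.
  have := hind (fun y => (y == h1)%:R).
  have h1s : h1 \in h1 :: s1 by rewrite inE eqxx.
  rewrite (sum_pred1 (u := h1) us h1s) ?eqxx ?mulr1z; last first.
    by move=> b _ /negbTE ->; rewrite mulr0z.
  rewrite {1}hp => /(_ (proj_span L f h1) h1 h1s); by rewrite eqxx.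
have [w [g1 [gw [agw gw1 qw g10 fw]]]] := dec_prim fr nq1.
have Gw : G w.
  apply: (purity sgG (st_ds st) _ g10); rewrite -qw; apply: sgB => //.
  by apply: (sg_span sgG (st_LG st)); apply: proj_span.
have [sg [asg sge sgL]] := move_prim (killf_add fr af) (killf_add fr agw)
  (etrans (killf_C _ fe) pe) (etrans (killf_C _ fw) gw1)
  (fun u uin => @killf_L L f phi u fr uin) (fun u uin => @killf_L L f gw u fr uin).
have sxe : sg x = p + w *~ g.
  have -> : x = p + e *~ g by rewrite -qe addrC subrK.
  by have [a _] := asg; rewrite a (sgL p (proj_span L f x)) auto_mulz // sge.
have uLw : uniq (L ++ [:: w]).
  by have [f' [[u _ _] _]] := extend_free fr fw agw gw1.
have ssx : spanL (L ++ [:: w]) (sg x).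
  rewrite sxe; apply: spanD; first by apply: span_ext_sub => //; apply: proj_span.
  by apply: spanMz; apply: span_mem => //; rewrite mem_cat inE eqxx orbT.
have he : forall m, spanL (L ++ [:: w]) (upd env n (sg x) m).
  by apply: upd_span => // m; apply: span_ext_sub => //; exact: (st_env st m).
have [f' [s' st']] := extend_state st fw agw gw1 Gw he.
exists sg; split => //.
  by rewrite sxe; apply: sgD => //; apply: sg_mulz.
exists (L ++ [:: w]), f', s'; split => // y; exact: span_ext_sub.
Qed.

Lemma transfer (phi : formula S) : forall G L f k s env, state G L f k s env ->
  consts_in (spanL L) phi -> (qd phi <= k)%N -> (holds G env phi <-> holds TT env phi).
Proof.
elim: phi => [t1 t2||g IH|g IHg h IHh|g IHg h IHh|g IHg h IHh|n g IH|n g IH]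
  G L f k s env st hc hq /=.
- by split.
- by split.
- by have := IH G L f k s env st hc hq; tauto.
- move: hq; rewrite geq_max => /andP[hg hh]; case: hc => hcg hch.
  by have := IHg G L f k s env st hcg hg; have := IHh G L f k s env st hch hh; tauto.
- move: hq; rewrite geq_max => /andP[hg hh]; case: hc => hcg hch.
  by have := IHg G L f k s env st hcg hg; have := IHh G L f k s env st hch hh; tauto.
- move: hq; rewrite geq_max => /andP[hg hh]; case: hc => hcg hch.
  by have := IHg G L f k s env st hcg hg; have := IHh G L f k s env st hch hh; tauto.
- case: k st hq => // k st hq; split.
  + move=> H x _.
    have [sg [asg hfix Gx [L' [f' [s' [st' sub]]]]]] := S_step n x st.
    have hc' : consts_in (spanL L') g := consts_mono sub hc.
    have := (IH _ _ _ _ _ _ st' hc' hq).1 (H _ Gx).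
    have eenv : sg \o env = env by apply: functional_extensionality => m /=; apply: hfix; exact: (st_env st m).
    move=> H1; apply: (holds_auto (phi := g) (upd env n x) asg (consts_mono hfix hc)).2.
    by rewrite upd_comp eenv.
  + move=> H x Gx.
    have [L' [f' [s' [st' sub]]]] := G_step n st Gx.
    by apply/(IH _ _ _ _ _ _ st' (consts_mono sub hc) hq); apply: H.
- case: k st hq => // k st hq; split.
  + move=> [x [Gx H]]; exists x; split => //.
    have [L' [f' [s' [st' sub]]]] := G_step n st Gx.
    by apply/(IH _ _ _ _ _ _ st' (consts_mono sub hc) hq).
  + move=> [x [_ H]].
    have [sg [asg hfix Gx [L' [f' [s' [st' sub]]]]]] := S_step n x st.
    exists (sg x); split => //.
    apply/(IH _ _ _ _ _ _ st' (consts_mono sub hc) hq).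
    have eenv : sg \o env = env by apply: functional_extensionality => m /=; apply: hfix; exact: (st_env st m).
    have := (holds_auto (phi := g) (upd env n x) asg (consts_mono hfix hc)).1 H.
    by rewrite upd_comp eenv.
Qed.

Lemma key (phi : formula S) : exists A0, in_I A0 /\
  (forall B, in_I B -> Defs.subset A0 B ->
     (holds B (fun _ => 0) phi <-> holds TT (fun _ => 0) phi) /\ consts_in B phi) /\
  (forall A, in_I A -> exists B, [/\ in_I B, Defs.subset A B & Defs.subset A0 B]).
Proof.
have [E0 [bE0 hE0]] := cover (fconsts phi).
have [H [sH bEH]] := fresh_list (qd phi) bE0.
have [uEH _] := bEH.
have uE0 : uniq E0 by case: bE0.
have uH : uniq H by move: uEH; rewrite cat_uniq => /and3P[].
have nEH : forall x, x \in H -> x \notin E0.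
  by move: uEH; rewrite cat_uniq => /and3P[_ /hasPn h _].
have bH : basisL H by split => // u uin; case: bEH => _; apply; rewrite mem_cat uin orbT.
exists (spanL (E0 ++ H)); split; first exact: spanE_in_I.
have cE0 : consts_in (spanL E0) phi by apply: fconsts_in.
split.
  move=> B [sB [_ dB]] sub.
  have E0B : forall y, spanL E0 y -> B y.
    move=> y sy; apply: sub; apply: span_sub sy => // v vin; by rewrite mem_cat vin.
  have st : state B E0 coord (qd phi) H (fun _ => 0).
    split => //.
    - exact: basis_free.
    - by move=> u uin; apply: E0B; apply: span_mem.
    - by move=> m; apply: span0.
    - split => // c hc x xH.
      have := coord_span0 bE0 hc (nEH x xH).
      by rewrite (free_coef _ (basis_free bH) xH).
    - by move=> x xH; apply: sub; apply: span_mem => //; rewrite mem_cat xH orbT.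
  split; first exact: transfer st cE0 (leqnn _).
  exact: consts_mono E0B cE0.
move=> A IA; have [EA [bEA hEA]] := A_sub_span IA.
set E := undup (EA ++ (E0 ++ H)).
have bE : basisL E.
  split; first exact: undup_uniq.
  move=> u; rewrite mem_undup mem_cat => /orP[uin|uin].
    by case: bEA => _; apply.
  by case: bEH => _; apply.
exists (spanL E); split; first exact: spanE_in_I.
  move=> a ha; apply: span_sub (hEA a ha); first by case: bEA.
    exact: undup_uniq.
  by move=> v vin; rewrite mem_undup mem_cat vin.
move=> y sy; apply: span_sub sy => //; first exact: undup_uniq.
by move=> v vin; rewrite mem_undup mem_cat vin orbT.
Qed.

End Basis.

Theorem mainTheorem13 (S : zmodType) (HS : free_abelian_infinite_rank S) :
  (forall f : formula S, limsup_I f <-> ThS f) /\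
  (forall f : formula S, liminf_I f <-> ThS f).
Proof.
have [Bp [Bind [Bspan Binf]]] := HS.
have ctrue : forall phi : formula S, consts_in (fun _ => True) phi.
  by move=> phi; apply: fconsts_in.
split => phi; have [A0 [IA0 [K Ext]]] := key Bind Bspan Binf phi.
- split.
  + move=> H; have [B [IB [sub [sent [_ hB]]]]] := H A0 IA0.
    split => //; split => //; exact: ((K B IB sub).1).1 hB.
  + move=> [sent [_ hS]] A IA; have [B [IB sAB s0B]] := Ext A IA.
    exists B; split => //; split => //; split => //; split.
      exact: (K B IB s0B).2.
    exact: ((K B IB s0B).1).2 hS.
- split.
  + move=> [A [IA H]]; have [B [IB sAB s0B]] := Ext A IA.
    have [sent [_ hB]] := H B IB sAB.
    split => //; split => //; exact: ((K B IB s0B).1).1 hB.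
  + move=> [sent [_ hS]]; exists A0; split => // B IB sub.
    split => //; split; first exact: (K B IB sub).2.
    exact: ((K B IB sub).1).2 hS.
Qed.
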